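(* Let $Q$ be a finite set, let $M\subseteq Q^5$ be an MDS code with code distance $4$, and let $M'\subseteq Q^4$ be a projection of $M$ in some direction $i\in\{1,\dots,5\}$. Then there exists an MDS code $C\subseteq Q^4$ with code distance $2$ such that $M'\subseteq C$.
   Context: A subset $C\subseteq Q^d$ is an MDS code with code distance $\varrho$ if $|C\cap\Gamma|=1$ for every $(\varrho-1)$-dimensional axis-aligned plane $\Gamma\subseteq Q^d$ (the set obtained by fixing some $d-\varrho+1$ coordinates and letting the other $\varrho-1$ range over $Q$). The projection of $C\subseteq Q^d$ in the $i$th direction is $C_i=\{(x_1,\dots,x_{i-1},x_{i+1},\dots,x_d)\mid \exists x_i: (x_1,\dots,x_d)\in C\}\subseteq Q^{d-1}$. *)

(* Defs.v *)
From mathcomp Require Import all_boot.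
Set Implicit Arguments. Unset Strict Implicit. Unset Printing Implicit Defensive.

Definition word (Q : finType) (d : nat) := {ffun 'I_d -> Q}.

Definition plane (Q : finType) (d : nat) (S : {set 'I_d}) (v : word Q d)
  : {set word Q d} := [set x : word Q d | [forall j in S, x j == v j]].

Definition is_MDS (Q : finType) (d rho : nat) (C : {set word Q d}) : Prop :=
  forall (S : {set 'I_d}) (v : word Q d),
    #|S| = d - rho + 1 -> #|C :&: plane S v| = 1.

Definition proj (Q : finType) (d : nat) (i : 'I_d.+1) (C : {set word Q d.+1})
  : {set word Q d} :=
  [set x : word Q d | [exists y in C, x == [ffun j => y (lift i j)]]].

(* Main.v *)
Require Import Defs.
From mathcomp Require Import all_boot.
Set Implicit Arguments. Unset Strict Implicit. Unset Printing Implicit Defensive.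

Lemma MDS2_crit (Q : finType) (C : {set word Q 4}) :
  (forall k : 'I_4, exists h : word Q 4 -> Q,
     (forall y : word Q 4, (y \in C) = (y k == h y)) /\
     (forall y y' : word Q 4, (forall j, j != k -> y j = y' j) -> h y = h y')) ->
  is_MDS 2 C.
Proof.
move=> H S v HS; rewrite /= in HS.
have : 0 < #|~: S|.
  by move: (cardsC S); rewrite HS card_ord; case: #|~: S| => //.
case/card_gt0P=> k; rewrite in_setC => kS.
have inS : forall j, j != k -> j \in S.
  move=> j jk; apply/negPn/negP=> jS.
  have : #|[set j; k]| <= #|~: S|.
    by apply: subset_leq_card; apply/subsetP=> x; rewrite !inE => /orP[]/eqP->; rewrite ?jS ?kS.
  by rewrite cards2 jk; move: (cardsC S); rewrite HS card_ord; case: #|~: S| => [|[|]]//.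
have [h [hC hL]] := H k.
set y0 : word Q 4 := [ffun j => if j == k then h v else v j].
have hy0 : h y0 = h v by apply: hL => j jk; rewrite ffunE (negbTE jk).
apply/eqP/cards1P; exists y0; apply/setP=> z; rewrite in_set1 inE.
apply/idP/eqP.
- case/andP=> zC; rewrite inE => /forallP zP.
  have zv : forall j, j != k -> z j = v j.
    by move=> j jk; apply/eqP; move: (zP j); rewrite inS.
  apply/ffunP=> j; rewrite ffunE; case: eqP => [->|/eqP jk]; last exact: zv.
  by rewrite (eqP (etrans (esym (hC z)) zC)); apply: hL.
- move=> ->; rewrite hC ffunE eqxx hy0 eqxx /= inE; apply/forallP=> j; apply/implyP=> jS.
  rewrite ffunE; case: ifP => [/eqP jk|_ //]; by move: jS; rewrite jk (negbTE kS).
Qed.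

Section S.
Variables (Q : finType) (M : {set word Q 5}).
Hypothesis HM : is_MDS 4 M.

Lemma M_ex (a b : 'I_5) (u w : Q) : a != b ->
  exists2 m, m \in M & (m a = u /\ m b = w).
Proof.
move=> ab.
set v : word Q 5 := [ffun j => if j == a then u else w].
have := HM (S:=[set a; b]) v; rewrite cards2 ab => /(_ erefl).
move/eqP/cards1P=> [m Hm].
have : m \in [set m] by rewrite in_set1.
rewrite -Hm !inE => /andP[mM /forallP P]; exists m => //.
move: (P a) (P b); rewrite !inE !eqxx ?orbT /= !ffunE eqxx ?(negbTE ab) eq_sym ?(negbTE ab) /=.
by rewrite [b == a]eq_sym (negbTE ab) => /eqP -> /eqP ->.
Qed.

Lemma M_uniq (a b : 'I_5) m m' : a != b -> m \in M -> m' \in M ->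
  m a = m' a -> m b = m' b -> m = m'.
Proof.
move=> ab mM m'M ea eb.
have := HM (S:=[set a; b]) m; rewrite cards2 ab => /(_ erefl).
move/eqP/cards1P=> [z Hz].
have inP : forall x, x \in M -> x a = m a -> x b = m b -> x = z.
  move=> x xM xa xb; apply/set1P; rewrite -Hz inE xM inE.
  by apply/forallP=> j; apply/implyP; rewrite !inE => /orP[]/eqP->; apply/eqP.
by rewrite (inP m) // (inP m').
Qed.
End S.

Section S.
Variables (Q : finType) (M : {set word Q 5}) (i : 'I_5).
Hypothesis HM : is_MDS 4 M.

Definition pt (a b : 'I_5) (u w : Q) : word Q 5 :=
  odflt [ffun=> u] [pick m in M | (m a == u) && (m b == w)].

Lemma ptP a b u w : a != b ->
  [/\ pt a b u w \in M, pt a b u w a = u & pt a b u w b = w].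
Proof.
move=> ab; rewrite /pt; case: pickP => [m /andP[mM /andP[/eqP -> /eqP ->]] // | none].
have [m mM [ma mb]] := M_ex HM u w ab.
by move: (none m); rewrite mM ma mb !eqxx.
Qed.

Definition o0 : 'I_4 := @Ordinal 4 0 isT.
Definition o1 : 'I_4 := @Ordinal 4 1 isT.
Definition o2 : 'I_4 := @Ordinal 4 2 isT.
Definition o3 : 'I_4 := @Ordinal 4 3 isT.
Definition c (j : 'I_4) : 'I_5 := lift i j.

Lemma cne (a b : 'I_4) : a != b -> c a != c b.
Proof. by rewrite /c (inj_eq lift_inj). Qed.
Lemma cie (a : 'I_4) : c a != i.
Proof. by rewrite eq_sym neq_lift. Qed.

Definition g (x0 x1 x2 : Q) : Q :=
  pt (c o2) i x2 (pt (c o0) (c o1) x0 x1 i) (c o3).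

Lemma inj0 b d : injective (fun a => g a b d).
Proof.
move=> a a'; rewrite /g.
have [mM m0 m1] := ptP a b (cne (a:=o0) (b:=o1) isT).
have [mM' m0' m1'] := ptP a' b (cne (a:=o0) (b:=o1) isT).
set m := pt _ _ a b in mM m0 m1 *; set m' := pt _ _ a' b in mM' m0' m1' *.
have [pM p2 pe] := ptP d (m i) (cie o2).
have [pM' p2' pe'] := ptP d (m' i) (cie o2).
move=> E.
have pp := M_uniq HM (cne (a:=o2) (b:=o3) isT) pM pM' (etrans p2 (esym p2')) E.
have mi : m i = m' i by rewrite -pe -pe' pp.
have mm := M_uniq HM (cie o1) mM mM' (etrans m1 (esym m1')) mi.
by rewrite -m0 -m0' mm.
Qed.

Lemma inj1 a d : injective (fun b => g a b d).
Proof.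
move=> b b'; rewrite /g.
have [mM m0 m1] := ptP a b (cne (a:=o0) (b:=o1) isT).
have [mM' m0' m1'] := ptP a b' (cne (a:=o0) (b:=o1) isT).
set m := pt _ _ a b in mM m0 m1 *; set m' := pt _ _ a b' in mM' m0' m1' *.
have [pM p2 pe] := ptP d (m i) (cie o2).
have [pM' p2' pe'] := ptP d (m' i) (cie o2).
move=> E.
have pp := M_uniq HM (cne (a:=o2) (b:=o3) isT) pM pM' (etrans p2 (esym p2')) E.
have mi : m i = m' i by rewrite -pe -pe' pp.
have mm := M_uniq HM (cie o0) mM mM' (etrans m0 (esym m0')) mi.
by rewrite -m1 -m1' mm.
Qed.

Lemma inj2 a b : injective (fun d => g a b d).
Proof.
move=> d d'; rewrite /g.
set t := pt _ _ a b i.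
have [pM p2 pe] := ptP d t (cie o2).
have [pM' p2' pe'] := ptP d' t (cie o2).
move=> E.
have pp := M_uniq HM (cie o3) pM pM' E (etrans pe (esym pe')).
by rewrite -p2 -p2' pp.
Qed.

Lemma gM y : y \in M -> g (y (c o0)) (y (c o1)) (y (c o2)) = y (c o3).
Proof.
move=> yM; rewrite /g.
have [mM m0 m1] := ptP (y (c o0)) (y (c o1)) (cne (a:=o0) (b:=o1) isT).
have -> := M_uniq HM (cne (a:=o0) (b:=o1) isT) mM yM m0 m1.
have [pM p2 pe] := ptP (y (c o2)) (y i) (cie o2).
by have -> := M_uniq HM (cie o2) pM yM p2 pe.
Qed.

End S.

Theorem proposition4 (Q : finType) (M : {set word Q 5}) (i : 'I_5) :
  is_MDS 4 M ->
  exists C : {set word Q 4}, is_MDS 2 C /\ proj i M \subset C.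
Proof.
move=> HM.
pose G := g M i.
exists [set x : word Q 4 | x o3 == G (x o0) (x o1) (x o2)]; split.
- apply: MDS2_crit => k.
  have : k = o0 \/ k = o1 \/ k = o2 \/ k = o3.
    by case: k => [[|[|[|[|//]]]] Hk]; [left|right;left|right;right;left|right;right;right]; apply: val_inj.
  have ne : forall a b : 'I_4, a != b -> forall y y' : word Q 4,
    (forall j, j != a -> y j = y' j) -> y b = y' b.
    by move=> a b ab y y' H; apply: H; rewrite eq_sym.
  case=> [->|[->|[->|->]]].
  + exists (fun y : word Q 4 => invF (@inj0 Q M i HM (y o1) (y o2)) (y o3)); split.
      move=> y; rewrite inE; apply/eqP/eqP => H.
        by rewrite H; exact: (esym (invF_f (@inj0 Q M i HM (y o1) (y o2)) (y o0))).
      by rewrite H; exact: (esym (f_invF (@inj0 Q M i HM (y o1) (y o2)) (y o3))).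
    by move=> y y' H; rewrite (ne o0 o1 isT y y' H) (ne o0 o2 isT y y' H) (ne o0 o3 isT y y' H).
  + exists (fun y : word Q 4 => invF (@inj1 Q M i HM (y o0) (y o2)) (y o3)); split.
      move=> y; rewrite inE; apply/eqP/eqP => H.
        by rewrite H; exact: (esym (invF_f (@inj1 Q M i HM (y o0) (y o2)) (y o1))).
      by rewrite H; exact: (esym (f_invF (@inj1 Q M i HM (y o0) (y o2)) (y o3))).
    by move=> y y' H; rewrite (ne o1 o0 isT y y' H) (ne o1 o2 isT y y' H) (ne o1 o3 isT y y' H).
  + exists (fun y : word Q 4 => invF (@inj2 Q M i HM (y o0) (y o1)) (y o3)); split.
      move=> y; rewrite inE; apply/eqP/eqP => H.
        by rewrite H; exact: (esym (invF_f (@inj2 Q M i HM (y o0) (y o1)) (y o2))).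
      by rewrite H; exact: (esym (f_invF (@inj2 Q M i HM (y o0) (y o1)) (y o3))).
    by move=> y y' H; rewrite (ne o2 o0 isT y y' H) (ne o2 o1 isT y y' H) (ne o2 o3 isT y y' H).
  + exists (fun y : word Q 4 => G (y o0) (y o1) (y o2)); split.
      by move=> y; rewrite inE.
    by move=> y y' H; rewrite (ne o3 o0 isT y y' H) (ne o3 o1 isT y y' H) (ne o3 o2 isT y y' H).
- apply/subsetP=> x; rewrite !inE => /existsP[y /andP[yM /eqP ->]].
  by rewrite !ffunE /G (@gM Q M i HM y yM).
Qed.
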